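(* Let $\mathbf{A}\in\mathbb{R}^{m\times n}$ be $s$-regular, where $s$ is an integer with $0<s<n$, let $\mathbf{b}\in\mathbb{R}^m$, and let $f(\mathbf{x})=\|\mathbf{A}\mathbf{x}-\mathbf{b}\|^2$, whose gradient is Lipschitz with constant $L(f)=2\lambda_{\max}(\mathbf{A}^T\mathbf{A})$. Then any sequence generated by the IHT method with constant $L>L(f)$ converges to an $L$-stationary point of the problem (P): minimize $f(\mathbf{x})$ subject to $\|\mathbf{x}\|_0\le s$.
   Context: A matrix $\mathbf{A}$ is $s$-regular if for every $I\subseteq\{1,\dots,n\}$ with $|I|=s$ the columns of $\mathbf{A}$ indexed by $I$ are linearly independent. $C_s=\{\mathbf{x}:\|\mathbf{x}\|_0\le s\}$ where $\|\mathbf{x}\|_0$ is the number of nonzero components. $P_{C_s}(\mathbf{y})=\operatorname{argmin}_{\mathbf{x}\in C_s}\|\mathbf{x}-\mathbf{y}\|^2$ (possibly multi-valued). The IHT method with constant $L$: choose $\mathbf{x}^0\in C_s$ and for $k=0,1,2,\dots$ pick any $\mathbf{x}^{k+1}\in P_{C_s}\!\left(\mathbf{x}^k-\frac1L\nabla f(\mathbf{x}^k)\right)$. A point $\mathbf{x}^*\in C_s$ is $L$-stationary if $\mathbf{x}^*\in P_{C_s}\!\left(\mathbf{x}^*-\frac1L\nabla f(\mathbf{x}^* )\right)$. *)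

(* Defs.v *)
From HB Require Import structures.
From mathcomp Require Import all_boot all_order all_algebra.
From mathcomp Require Import all_classical all_reals all_analysis.
Set Implicit Arguments. Unset Strict Implicit. Unset Printing Implicit Defensive.
Import Order.TTheory GRing.Theory Num.Theory.
Import numFieldNormedType.Exports.
Local Open Scope ring_scope.
Local Open Scope classical_set_scope.

Definition sqnorm (R : realType) (n : nat) (v : 'cV[R]_n) : R :=
  \sum_(i < n) (v i 0) ^+ 2.

Definition l0norm (R : realType) (n : nat) (x : 'cV[R]_n) : nat :=
  #|[set i : 'I_n | x i 0 != 0]|.

Definition Cs (R : realType) (n s : nat) (x : 'cV[R]_n) : Prop :=
  (l0norm x <= s)%N.

(* A is s-regular: for every I with |I| = s the columns of A indexed by I are
   linearly independent, i.e. the only combination of them that is 0 is trivial. *)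
Definition s_regular (R : realType) (m n s : nat) (A : 'M[R]_(m, n)) : Prop :=
  forall I : {set 'I_n}, #|I| = s ->
    forall c : 'cV[R]_n, (forall i, i \notin I -> c i 0 = 0) ->
      A *m c = 0 -> c = 0.

(* x is an element of P_{C_s}(y) (the projection is multi-valued) *)
Definition in_proj_Cs (R : realType) (n s : nat) (y x : 'cV[R]_n) : Prop :=
  Cs s x /\ forall z : 'cV[R]_n, Cs s z -> sqnorm (x - y) <= sqnorm (z - y).

Definition lsq (R : realType) (m n : nat) (A : 'M[R]_(m, n)) (b : 'cV[R]_m)
  (x : 'cV[R]_n) : R := sqnorm (A *m x - b).

Definition grad_lsq (R : realType) (m n : nat) (A : 'M[R]_(m, n)) (b : 'cV[R]_m)
  (x : 'cV[R]_n) : 'cV[R]_n := 2%:R *: (A^T *m (A *m x - b)).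

Definition lambda_max (R : realType) (n : nat) (M : 'M[R]_n) : R :=
  sup [set a : R | eigenvalue M a].

Definition Lf (R : realType) (m n : nat) (A : 'M[R]_(m, n)) : R :=
  2%:R * lambda_max (A^T *m A).

Definition IHT_seq (R : realType) (m n s : nat) (A : 'M[R]_(m, n)) (b : 'cV[R]_m)
  (L : R) (x : nat -> 'cV[R]_n) : Prop :=
  Cs s (x 0%N) /\
  forall k, in_proj_Cs s (x k - L^-1 *: grad_lsq A b (x k)) (x k.+1).

Definition L_stationary (R : realType) (m n s : nat) (A : 'M[R]_(m, n)) (b : 'cV[R]_m)
  (L : R) (xs : 'cV[R]_n) : Prop :=
  Cs s xs /\ in_proj_Cs s (xs - L^-1 *: grad_lsq A b xs) xs.

(* Main.v *)
Require Import Defs.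
From HB Require Import structures.
From mathcomp Require Import all_boot all_order all_algebra.
From mathcomp Require Import all_classical all_reals all_analysis.
From mathcomp Require Import ring lra zify.
Import Order.TTheory GRing.Theory Num.Theory.
Import numFieldNormedType.Exports.
Local Open Scope ring_scope.
Local Open Scope classical_set_scope.
Set Implicit Arguments. Unset Strict Implicit. Unset Printing Implicit Defensive.

Section Vec.
Variable R : realType.
Variable n : nat.
Implicit Types u v w : 'cV[R]_n.

Definition dot u v : R := \sum_(i < n) u i 0 * v i 0.

Lemma sqnormE v : sqnorm v = dot v v.
Proof. by apply: eq_bigr => i _; rewrite expr2. Qed.

Lemma dotC u v : dot u v = dot v u.
Proof. by apply: eq_bigr => i _; rewrite mulrC. Qed.

Lemma dotDl u v w : dot (u + v) w = dot u w + dot v w.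
Proof. by rewrite /dot -big_split /=; apply: eq_bigr => i _; rewrite !mxE mulrDl. Qed.

Lemma dotDr u v w : dot w (u + v) = dot w u + dot w v.
Proof. by rewrite dotC dotDl !(dotC w). Qed.

Lemma dotZl (a : R) u v : dot (a *: u) v = a * dot u v.
Proof. by rewrite /dot mulr_sumr; apply: eq_bigr => i _; rewrite !mxE mulrA. Qed.

Lemma dotZr (a : R) u v : dot v (a *: u) = a * dot v u.
Proof. by rewrite dotC dotZl dotC. Qed.

Lemma dotNl u v : dot (- u) v = - dot u v.
Proof. by rewrite -scaleN1r dotZl mulN1r. Qed.

Lemma dotNr u v : dot v (- u) = - dot v u.
Proof. by rewrite dotC dotNl dotC. Qed.

Lemma dotBl u v w : dot (u - v) w = dot u w - dot v w.
Proof. by rewrite dotDl dotNl. Qed.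

Lemma dotBr u v w : dot w (u - v) = dot w u - dot w v.
Proof. by rewrite dotDr dotNr. Qed.

Lemma dot0l v : dot 0 v = 0.
Proof. by rewrite /dot big1 // => i _; rewrite mxE mul0r. Qed.

Lemma sqnorm_ge0 v : 0 <= sqnorm v.
Proof. by apply: sumr_ge0 => i _; rewrite sqr_ge0. Qed.

Lemma entry_le v i : (v i 0) ^+ 2 <= sqnorm v.
Proof.
rewrite /sqnorm (bigD1 i) //= lerDl; apply: sumr_ge0 => j _; exact: sqr_ge0.
Qed.

Lemma sqnorm_eq0 v : sqnorm v = 0 -> v = 0.
Proof.
move=> h; apply/matrixP => i j; rewrite (ord1 j) mxE.
have := entry_le v i; rewrite h => h2.
have h3 : (v i 0) ^+ 2 = 0 by apply/eqP; rewrite eq_le h2 sqr_ge0.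
by move/eqP: h3; rewrite sqrf_eq0 => /eqP.
Qed.

Lemma sqnormD u v : sqnorm (u + v) = sqnorm u + 2 * dot u v + sqnorm v.
Proof. rewrite !sqnormE dotDl !dotDr (dotC v u); ring. Qed.

Lemma sqnormB u v : sqnorm (u - v) = sqnorm u - 2 * dot u v + sqnorm v.
Proof. rewrite !sqnormE dotDl !dotDr !dotNl !dotNr (dotC v u); ring. Qed.

Lemma sqnormZ (a : R) v : sqnorm (a *: v) = a ^+ 2 * sqnorm v.
Proof. rewrite !sqnormE dotZl dotZr; ring. Qed.

Lemma CS u v : dot u v ^+ 2 <= sqnorm u * sqnorm v.
Proof.
have [h|h] := eqVneq (sqnorm v) 0.
  by rewrite h mulr0 (sqnorm_eq0 h) dotC dot0l expr0n.
have hv : 0 < sqnorm v by rewrite lt_neqAle eq_sym h sqnorm_ge0.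
have := sqnorm_ge0 (sqnorm v *: u - dot u v *: v).
rewrite sqnormB !sqnormZ dotZl dotZr => H.
have : 0 <= sqnorm v * (sqnorm v * sqnorm u - dot u v ^+ 2).
  by move: H; set a := sqnorm v; set d := dot u v; set c := sqnorm u;
     move=> H; nra.
rewrite pmulr_rge0 // subr_ge0 mulrC //.
Qed.

Lemma dot_young (eta : R) u v : 0 < eta ->
  2 * dot u v <= eta * sqnorm u + sqnorm v / eta.
Proof.
move=> he; have := sqnorm_ge0 (eta *: u - v).
rewrite sqnormB sqnormZ dotZl => H.
have H2 : 2 * eta * dot u v <= eta * (eta * sqnorm u + sqnorm v / eta).
  have -> : eta * (eta * sqnorm u + sqnorm v / eta) = eta ^+ 2 * sqnorm u + sqnorm v.
    by field; rewrite gt_eqF.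
  lra.
rewrite -(ler_pM2l he); lra.
Qed.

Lemma sqnormB_le u v : sqnorm (u - v) <= 2 * (sqnorm u + sqnorm v).
Proof.
have := sqnorm_ge0 (u + v); rewrite sqnormD sqnormB; lra.
Qed.

End Vec.

Section Mat.
Variable R : realType.

Lemma dot_mul p n (P : 'M[R]_(p, n)) (u : 'cV[R]_n) (v : 'cV[R]_p) :
  dot (P *m u) v = dot u (P^T *m v).
Proof.
rewrite /dot.
under eq_bigr do rewrite mxE mulr_suml.
rewrite exchange_big /=; apply: eq_bigr => j _.
rewrite mxE mulr_sumr; apply: eq_bigr => i _; rewrite !mxE; ring.
Qed.

Definition mxc p n (P : 'M[R]_(p, n)) : R := \sum_(i < p) \sum_(j < n) P i j ^+ 2.

Lemma mxc_ge0 p n (P : 'M[R]_(p, n)) : 0 <= mxc P.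
Proof. by apply: sumr_ge0 => i _; apply: sumr_ge0 => j _; apply: sqr_ge0. Qed.

Lemma mx_bound p n (P : 'M[R]_(p, n)) (v : 'cV[R]_n) :
  sqnorm (P *m v) <= mxc P * sqnorm v.
Proof.
rewrite /sqnorm /mxc mulr_suml; apply: ler_sum => i _.
have -> : (P *m v) i 0 = dot (\col_j P i j) v.
  by rewrite mxE; apply: eq_bigr => j _; rewrite mxE.
have -> : \sum_(j < n) P i j ^+ 2 = sqnorm (\col_j P i j).
  by apply: eq_bigr => j _; rewrite mxE.
exact: CS.
Qed.

End Mat.

Section Spec.
Variable R : realType.

Lemma sqnorm_gt0 n (v : 'cV[R]_n) : v != 0 -> 0 < sqnorm v.
Proof.
move=> hv; rewrite lt_neqAle sqnorm_ge0 andbT eq_sym; apply/eqP => h.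
by move/eqP: hv; apply; apply: sqnorm_eq0.
Qed.

Lemma spec_bound m n (A : 'M[R]_(m, n)) : (0 < n)%N ->
  forall v : 'cV[R]_n, sqnorm (A *m v) <= lambda_max (A^T *m A) * sqnorm v.
Proof.
move=> n0.
set M := A^T *m A.
have Msym : M^T = M by rewrite /M trmx_mul trmxK.
set S := [set r : R | exists2 v : 'cV[R]_n, v != 0 & r = sqnorm (A *m v) / sqnorm v].
have v0nz : (const_mx 1 : 'cV[R]_n) != 0.
  apply/eqP => /matrixP /(_ (Ordinal n0) 0); rewrite !mxE => /eqP.
  by rewrite oner_eq0.
have Sne : S !=set0.
  by exists (sqnorm (A *m const_mx 1) / sqnorm (const_mx 1 : 'cV[R]_n)); exists (const_mx 1).
have Sub : has_ubound S.
  exists (mxc A) => r [v vnz ->].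
  by rewrite ler_pdivrMr ?sqnorm_gt0 // mx_bound.
have hS : has_sup S by split.
set mu := sup S.
have bnd : forall v : 'cV[R]_n, sqnorm (A *m v) <= mu * sqnorm v.
  move=> v; have [->|vnz] := eqVneq v 0.
    by rewrite mulmx0 /sqnorm !big1 ?mulr0 // => i _; rewrite mxE expr0n.
  rewrite -ler_pdivrMr ?sqnorm_gt0 //; apply: ub_le_sup => //; by exists v.
have mu0 : 0 <= mu.
  apply: le_trans (ub_le_sup Sub (_ : S (sqnorm (A *m const_mx 1) / sqnorm (const_mx 1 : 'cV[R]_n)))).
    by apply: divr_ge0; apply: sqnorm_ge0.
  by exists (const_mx 1).
have eig_le : forall a, eigenvalue M a -> a <= mu.
  move=> a /eigenvalueP [v hv vnz].
  have wnz : v^T != 0 by apply: contra vnz => /eqP h; rewrite -(trmxK v) h linear0.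
  have Mw : M *m v^T = a *: v^T by rewrite -{1}Msym -trmx_mul hv linearZ.
  have : a * sqnorm v^T <= mu * sqnorm v^T.
    apply: le_trans (bnd _); rewrite [sqnorm (A *m _)]sqnormE dot_mul mulmxA -/M Mw dotZr -sqnormE //.
  by rewrite ler_pM2r ?sqnorm_gt0.
have mu_le : mu <= lambda_max M.
  apply: ub_le_sup; first by exists mu => a; apply: eig_le.
  suff : eigenvalue M mu by [].
  have [//|neig] := boolP (eigenvalue M mu); exfalso.
  set N := mu%:M - M.
  have Nsym : N^T = N by rewrite /N linearB /= tr_scalar_mx Msym.
  have Nu : N \in unitmx.
    rewrite unitmxE unitfE; apply/negP => /det0P [v vnz hv].
    move/negP: neig; apply; apply/eigenvalueP; exists v => //.
    move/eqP: hv; rewrite /N mulmxBr subr_eq0 mul_mx_scalar => /eqP <- //.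
  have qE : forall w : 'cV[R]_n, dot w (N *m w) = mu * sqnorm w - sqnorm (A *m w).
    move=> w; rewrite /N mulmxBl mul_scalar_mx dotBr dotZr -mulmxA -dot_mul !sqnormE //.
  have qge0 : forall w : 'cV[R]_n, 0 <= dot w (N *m w).
    by move=> w; rewrite qE subr_ge0.
  have Nsy : forall u v : 'cV[R]_n, dot u (N *m v) = dot (N *m u) v.
    by move=> u v; rewrite dot_mul Nsym.
  set c2 := mu + 1.
  have c2p : 0 < c2 by rewrite /c2; lra.
  have key : forall v : 'cV[R]_n, sqnorm (N *m v) <= c2 * dot v (N *m v).
    move=> v; set t := - c2^-1.
    have := qge0 (v + t *: (N *m v)).
    rewrite mulmxDr -scalemxAr !dotDl !dotDr !dotZl !dotZr (Nsy v (N *m v)) -sqnormE.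
    have qN : dot (N *m v) (N *m (N *m v)) <= c2 * sqnorm (N *m v).
      rewrite qE; have := sqnorm_ge0 (A *m (N *m v)); have := sqnorm_ge0 (N *m v).
      rewrite /c2; nra.
    have ht : c2 * t = -1 by rewrite /t mulrN divff ?gt_eqF.
    move: qN; set q := dot v (N *m v); set B := sqnorm (N *m v);
      set Q := dot (N *m v) (N *m (N *m v)) => qN H.
    have H3 : t * (t * Q) <= t * t * (c2 * B).
      by rewrite mulrA ler_wpM2l // -expr2 sqr_ge0.
    have H4 : 0 <= c2 * (q + 2 * t * B + t * t * (c2 * B)).
      by apply: mulr_ge0; [lra | lra].
    have E : c2 * (q + 2 * t * B + t * t * (c2 * B)) = c2 * q + 2 * (c2 * t) * B + (c2 * t) * (c2 * t) * B by ring.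
    rewrite E in H4.
    rewrite ht in H4; lra.
  set c1 := mxc (invmx N) + 1.
  have c1p : 0 < c1 by rewrite /c1; have := mxc_ge0 (invmx N); lra.
  have hw : forall w : 'cV[R]_n, sqnorm w <= c1 * c2 * dot w (N *m w).
    move=> w; have := mx_bound (invmx N) (N *m w); rewrite mulKmx // => h1.
    have h2 := key w; have h3 := sqnorm_ge0 (N *m w); have h4 := mxc_ge0 (invmx N).
    have h5 := qge0 w.
    rewrite /c1 in c1p *; nra.
  set eps := (c1 * c2)^-1.
  have epsp : 0 < eps by rewrite invr_gt0 mulr_gt0.
  have : mu <= mu - eps.
    apply: ge_sup => // r [v vnz ->].
    rewrite ler_pdivrMr ?sqnorm_gt0 //.
    have := hw v; rewrite qE => h.
    have e1 : c1 * c2 * eps = 1 by rewrite /eps divff // mulf_neq0 ?gt_eqF.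
    have := sqnorm_ge0 v; have := sqnorm_ge0 (A *m v).
    move: h e1; set X := sqnorm v; set Y := sqnorm (A *m v); set c := c1 * c2.
    move=> h e1 h6 h7.
    have : eps * X <= eps * (c * (mu * X - Y)) by rewrite ler_wpM2l // ltW.
    rewrite mulrA (mulrC eps c) e1 mul1r; nra.
  lra.
move=> v; apply: le_trans (bnd v) _; apply: ler_wpM2r => //; exact: sqnorm_ge0.
Qed.

End Spec.

Section Desc.
Variable R : realType.
Variables m n s : nat.
Variable A : 'M[R]_(m, n).
Variable b : 'cV[R]_m.

Lemma vecE1 (x x' y : 'cV[R]_n) (c : R) : x' - (x - c *: y) = (x' - x) + c *: y.
Proof. by rewrite opprB addrA addrAC. Qed.

Lemma vecE2 (x y : 'cV[R]_n) (c : R) : x - (x - c *: y) = c *: y.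
Proof. by rewrite opprB addrA addrAC subrr add0r. Qed.

Lemma descent (L mu : R) (x x' : 'cV[R]_n) : 0 < L ->
  (forall v, sqnorm (A *m v) <= mu * sqnorm v) ->
  Cs s x -> in_proj_Cs s (x - L^-1 *: grad_lsq A b x) x' ->
  lsq A b x' <= lsq A b x - (L / 2 - mu) * sqnorm (x' - x).
Proof.
move=> Lp hmu Cx [_ hp]; have := hp x Cx.
rewrite vecE1 vecE2 sqnormD => h.
set d := x' - x in h *; set r := A *m x - b.
have ex : x' = x + d by rewrite /d addrC subrK.
have eAx : A *m x' - b = r + A *m d by rewrite ex mulmxDr /r addrAC.
rewrite /lsq eAx -/r sqnormD.
move: h; rewrite /grad_lsq -/r !scalerA dotZr -dot_mul => h.
have := hmu d; have := sqnorm_ge0 d; have := sqnorm_ge0 (L^-1 * 2%:R *: (A^T *m r)).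
move: h; rewrite (dotC r).
set D := sqnorm d; set q := dot (A *m d) r; set E := sqnorm (L^-1 * 2%:R *: (A^T *m r)).
set F := sqnorm (A *m d) => h h1 h2 h3.
have h4 : D + 4 * L^-1 * q <= 0 by move: h; rewrite -mulr_natl; lra.
have h5 : L * D + 4 * q <= 0.
  have : L * (D + 4 * L^-1 * q) <= 0 by rewrite pmulr_rle0.
  by rewrite mulrDr (mulrC 4) mulrA mulrA mulfV ?gt_eqF // mul1r mulrC.
lra.
Qed.

Lemma supp_le (x z : 'cV[R]_n) : (forall i, z i 0 != 0 -> x i 0 != 0) ->
  (l0norm z <= l0norm x)%N.
Proof.
move=> h; apply: subset_leq_card; apply/fintype.subsetP => i; rewrite !inE; exact: h.
Qed.

Lemma proj_coord (y x' : 'cV[R]_n) i : in_proj_Cs s y x' -> x' i 0 != 0 -> x' i 0 = y i 0.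
Proof.
move=> [Cx hp] hi.
set z := \col_j (if j == i then y i 0 else x' j 0).
have Cz : Cs s z.
  apply: leq_trans Cx; apply: supp_le => j; rewrite mxE.
  by case: (eqVneq j i) => [->|_] //= _.
have := hp z Cz.
rewrite /sqnorm (bigD1 i) //= [X in _ <= X](bigD1 i) //=.
rewrite !mxE eqxx subrr expr0n /= add0r.
rewrite [X in _ <= X](eq_bigr (fun j => (x' - y) j 0 ^+ 2)); last first.
  by move=> j hj; rewrite !mxE (negbTE hj).
set S := \sum_(_ < n | _) _ => h.
have : (x' i 0 - y i 0) ^+ 2 = 0.
  by apply/eqP; rewrite eq_le sqr_ge0 andbT; lra.
by move/eqP; rewrite sqrf_eq0 subr_eq0 => /eqP.
Qed.

Lemma grad_supp (L : R) (x x' : 'cV[R]_n) i : 0 < L ->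
  in_proj_Cs s (x - L^-1 *: grad_lsq A b x) x' -> x' i 0 != 0 ->
  (A^T *m (A *m x' - b)) i 0 = ((A^T *m A - (L / 2)%:M) *m (x' - x)) i 0.
Proof.
move=> Lp hp hi; have := proj_coord hp hi.
have ex : x' = x + (x' - x) by rewrite addrC subrK.
have eAx : A *m x' - b = (A *m x - b) + A *m (x' - x).
  by rewrite {1}ex mulmxDr addrAC.
rewrite eAx mulmxDr mulmxBl mul_scalar_mx mulmxA.
rewrite /grad_lsq !mxE.
set g := (A^T *m (A *m x - b)) i 0; set h := ((A^T *m A) *m (x' - x)) i 0.
move=> e; rewrite e; field; rewrite gt_eqF //.
Qed.

End Desc.

Section Restr.
Variable R : realType.
Variables m n s : nat.
Variable A : 'M[R]_(m, n).
Variable b : 'cV[R]_m.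

Definition Dm (S : {set 'I_n}) : 'M[R]_n := diag_mx (\row_i ((i \in S)%:R)).

Lemma DmE S (v : 'cV[R]_n) i : (Dm S *m v) i 0 = if i \in S then v i 0 else 0.
Proof. by rewrite /Dm mul_diag_mx !mxE; case: (i \in S); rewrite ?mul1r ?mul0r. Qed.

Lemma Dm_le S (v : 'cV[R]_n) : sqnorm (Dm S *m v) <= sqnorm v.
Proof.
apply: ler_sum => i _; rewrite DmE; case: (i \in S) => //; rewrite expr0n /=; exact: sqr_ge0.
Qed.

Definition KS (S : {set 'I_n}) : 'M[R]_n := Dm S *m (A^T *m A *m Dm S) + (1%:M - Dm S).

Definition zS (S : {set 'I_n}) : 'cV[R]_n := invmx (KS S) *m (Dm S *m (A^T *m b)).

Lemma KSE S (w : 'cV[R]_n) i : (KS S *m w) i 0 =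
  if i \in S then (A^T *m A *m (Dm S *m w)) i 0 else w i 0.
Proof.
rewrite /KS mulmxDl -mulmxA mulmxBl mul1mx.
have eD : forall X Y : 'cV[R]_n, (X + Y) i 0 = X i 0 + Y i 0 by move=> X Y; rewrite mxE.
have eB : forall X Y : 'cV[R]_n, (X - Y) i 0 = X i 0 - Y i 0 by move=> X Y; rewrite !mxE.
rewrite eD eB !DmE -[_ *m Dm S *m w]mulmxA.
by case: (i \in S); rewrite ?subrr ?addr0 ?add0r ?subr0.
Qed.

Lemma extend_set (S : {set 'I_n}) : (#|S| <= s)%N -> (s <= n)%N ->
  exists I : {set 'I_n}, S \subset I /\ #|I| = s.
Proof.
move=> hS hsn; move: {2}(s - #|S|)%N (erefl (s - #|S|)%N) => k.
elim: k S hS => [|k IH] S hS hk.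
  by exists S; split => //; apply/eqP; rewrite eqn_leq hS /=; rewrite -subn_eq0 hk.
have : (0 < #|~: S|)%N by have := cardsC S; rewrite card_ord; lia.
case/card_gt0P => i; rewrite inE => hi.
have [||I [h1 h2]] := IH (i |: S).
- by rewrite cardsU1 hi; lia.
- by rewrite cardsU1 hi; lia.
exists I; split => //; exact: (fintype.subset_trans (finset.subsetUr [set i] S) h1).
Qed.

Hypothesis sreg : s_regular s A.
Hypothesis hsn : (s <= n)%N.

Lemma KS_unit (S : {set 'I_n}) : (#|S| <= s)%N -> KS S \in unitmx.
Proof.
move=> hS; have [I [hSI hI]] := extend_set hS hsn.
rewrite unitmxE unitfE; apply/negP => /det0P [v vnz hv].
set w := v^T.
have KT : (KS S)^T = KS S.
  rewrite /KS linearD /= !trmx_mul linearB /= trmx1 trmxK /Dm tr_diag_mx; by rewrite !mulmxA.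
have Kw : KS S *m w = 0 by rewrite /w -KT -trmx_mul hv linear0.
have wS : forall i, i \notin S -> w i 0 = 0.
  move=> i hi; have := congr1 (fun M : 'cV[R]_n => M i 0) Kw; rewrite /= KSE (negbTE hi) => ->; by rewrite mxE.
have Dw : Dm S *m w = w.
  apply/matrixP => i j; rewrite (ord1 j) DmE; case: ifPn => // hi; by rewrite wS.
have Aw : A *m w = 0.
  apply: sqnorm_eq0; rewrite sqnormE dot_mul.
  rewrite /dot big1 // => i _.
  have [hi|hi] := boolP (i \in S).
    have := congr1 (fun M : 'cV[R]_n => M i 0) Kw; rewrite /= KSE hi Dw -mulmxA => ->.
    by rewrite [X in _ * X]mxE mulr0.
  by rewrite wS // mul0r.
have w0 : w = 0.
  apply: (sreg hI) => // i hi; apply: wS; apply: contra hi; exact: (fintype.subsetP hSI).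
by move/eqP: vnz; apply; rewrite -(trmxK v) -/w w0 linear0.
Qed.

Lemma zS_bound (S : {set 'I_n}) (x : 'cV[R]_n) : (#|S| <= s)%N -> (forall i, i \notin S -> x i 0 = 0) ->
  sqnorm (x - zS S) <= mxc (invmx (KS S)) * sqnorm (Dm S *m (A^T *m (A *m x - b))).
Proof.
move=> hS hx; have hu := KS_unit hS.
have Dx : Dm S *m x = x.
  apply/matrixP => i j; rewrite (ord1 j) DmE; case: ifPn => // hi; by rewrite hx.
have -> : x - zS S = invmx (KS S) *m (Dm S *m (A^T *m (A *m x - b))).
  rewrite -[LHS](mulKmx hu); congr (_ *m _).
  rewrite mulmxBr /zS mulKVmx // /KS mulmxDl -!mulmxA Dx mulmxBl mul1mx Dx subrr addr0.
  by rewrite !mulmxBr !mulmxA.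
exact: mx_bound.
Qed.

End Restr.

Section Misc.
Variable R : realType.

Lemma fin_pos_min (T : finType) (F : T -> R) :
  exists2 e : R, 0 < e & forall t, 0 < F t -> e < F t.
Proof.
set G := fun t => if 0 < F t then (F t)^-1 else 0.
have Gge0 : forall t, 0 <= G t.
  by move=> t; rewrite /G; case: ifP => // h; rewrite invr_ge0 ltW.
set Sg := \sum_t G t.
have Sge0 : 0 <= Sg by apply: sumr_ge0 => t _.
exists (1 + Sg)^-1; first by rewrite invr_gt0; lra.
move=> t ht.
have hG : G t <= Sg.
  rewrite /Sg (bigD1 t) //= lerDl; apply: sumr_ge0 => u _; exact: Gge0.
have : (F t)^-1 < 1 + Sg by move: hG; rewrite /G ht; lra.
rewrite -ltf_pV2 ?posrE ?invr_gt0 //; last by lra.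
by rewrite invrK.
Qed.

Lemma sqnormN n (v : 'cV[R]_n) : sqnorm (- v) = sqnorm v.
Proof. by rewrite !sqnormE dotNl dotNr opprK. Qed.

Lemma sqnorm_sym n (u v : 'cV[R]_n) : sqnorm (u - v) = sqnorm (v - u).
Proof. by rewrite -sqnormN opprB. Qed.

Lemma sqnorm3 n (u v w : 'cV[R]_n) :
  sqnorm (u + v + w) <= 3 * (sqnorm u + sqnorm v + sqnorm w).
Proof.
rewrite !sqnormD dotDl.
have := dot_young u v ltr01; have := dot_young u w ltr01; have := dot_young v w ltr01.
rewrite !invr1 !mulr1 !mul1r; lra.
Qed.

Lemma tri n (a b1 b2 c : 'cV[R]_n) :
  sqnorm (a - c) <= 3 * (sqnorm (a - b1) + sqnorm (b1 - b2) + sqnorm (b2 - c)).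
Proof.
have -> : a - c = (a - b1) + (b1 - b2) + (b2 - c).
  by apply/matrixP => i j; rewrite !mxE; ring.
exact: sqnorm3.
Qed.

Lemma Glem n (eta : R) (w u e f : 'cV[R]_n) : 0 < eta ->
  sqnorm (w + e) <= sqnorm (u + f) ->
  sqnorm w - sqnorm u <= eta * (sqnorm w + sqnorm u) + (sqnorm e + sqnorm f) / eta + sqnorm f.
Proof.
move=> he; rewrite !sqnormD => h.
have h1 := dot_young u f he.
have h2 := dot_young w (- e) he.
rewrite dotNr sqnormN in h2.
have h3 := sqnorm_ge0 e.
rewrite mulrDl mulrDr; lra.
Qed.

Definition ev0 (u : nat -> R) := forall e, 0 < e -> exists N, forall k, (N <= k)%N -> u k < e.

Lemma ev0_cvg n (x : nat -> 'cV[R]_n) (p : 'cV[R]_n) :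
  ev0 (fun k => sqnorm (x k - p)) -> x @ \oo --> p.
Proof.
move=> h; apply/cvgrPdist_lt => e e0.
have [N hN] := h (e ^+ 2) (exprn_gt0 _ e0).
exists N => // k /= hk.
have hk2 := hN k hk.
have nE : `|p - x k| = mx_norm (p - x k) by [].
rewrite nE.
have [h0|] := eqVneq (mx_norm (p - x k)) 0.
  by rewrite h0.
move=> /mx_norm_neq0 [[i j] hij].
rewrite hij /= (ord1 j).
have := entry_le (p - x k) i; rewrite sqnorm_sym => h1.
have h2 : ((p - x k) i 0) ^+ 2 < e ^+ 2 by apply: le_lt_trans hk2.
rewrite -real_normK ?num_real // in h2.
by rewrite -(ltr_pXn2r (_ : (0 < 2)%N)) ?nnegrE ?normr_ge0 ?ltW.
Qed.

End Misc.

Section Step.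
Variable R : realType.
Variables m n s : nat.
Variable A : 'M[R]_(m, n).
Variable b : 'cV[R]_m.
Hypothesis sreg : s_regular s A.
Hypothesis hsn : (s <= n)%N.

Definition supp (v : 'cV[R]_n) : {set 'I_n} := [set i | v i 0 != 0]%SET.

Lemma l0E (v : 'cV[R]_n) : l0norm v = #|supp v|.
Proof. rewrite /l0norm; apply: eq_card => i; rewrite !inE; apply/idP/idP => [/asboolP //|h]; exact/asboolP. Qed.

Lemma step_bound (L : R) (x x' : 'cV[R]_n) : 0 < L ->
  in_proj_Cs s (x - L^-1 *: grad_lsq A b x) x' ->
  sqnorm (x' - zS A b (supp x')) <=
    mxc (invmx (KS A (supp x'))) * (mxc (A^T *m A - (L / 2)%:M) * sqnorm (x' - x)).
Proof.
move=> Lp hp.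
have hS : (#|supp x'| <= s)%N by rewrite -l0E; case: hp.
have hx : forall i, i \notin supp x' -> x' i 0 = 0.
  by move=> i; rewrite inE negbK => /eqP.
have h1 := @zS_bound R m n s A b sreg hsn (supp x') x' hS hx.
apply: le_trans h1 _.
apply: ler_wpM2l; first exact: mxc_ge0.
have -> : @Dm R n (supp x') *m (A^T *m (A *m x' - b)) =
          @Dm R n (supp x') *m ((A^T *m A - (L / 2)%:M) *m (x' - x)).
  apply/matrixP => i j; rewrite (ord1 j) !DmE; case: ifPn => // hi.
  by apply: (grad_supp Lp hp); move: hi; rewrite inE.
apply: le_trans (Dm_le _ _) _; exact: mx_bound.
Qed.

End Step.

Theorem theorem3p2 (R : realType) (m n s : nat) (A : 'M[R]_(m, n))
  (b : 'cV[R]_m) (L : R) (x : nat -> 'cV[R]_n) :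
  (0 < s)%N -> (s < n)%N -> s_regular s A ->
  Lf A < L -> IHT_seq s A b L x ->
  exists xs : 'cV[R]_n, L_stationary s A b L xs /\ x @ \oo --> xs.
Proof.
move=> s0 sn sreg hL [x0C hstep].
have n0 : (0 < n)%N by lia.
have hsn : (s <= n)%N by lia.
set mu := lambda_max (A^T *m A).
have hmu : forall v : 'cV[R]_n, sqnorm (A *m v) <= mu * sqnorm v := spec_bound A n0.
have mu0 : 0 <= mu.
  have v1nz : (const_mx 1 : 'cV[R]_n) != 0.
    apply/eqP => /matrixP /(_ (Ordinal n0) 0); rewrite !mxE => /eqP.
    by rewrite oner_eq0.
  have h1 := hmu (const_mx 1); have h2 := sqnorm_gt0 v1nz.
  have h3 := sqnorm_ge0 (A *m const_mx 1).
  move: h1 h2 h3; set X := sqnorm _; set Y := sqnorm _ => h1 h2 h3; nra.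
have hL' : 2 * mu < L by move: hL; rewrite /Lf.
have Lp : 0 < L by lra.
set gam := L / 2 - mu.
have gp : 0 < gam by rewrite /gam; lra.
have hC : forall k, Cs s (x k) by elim => // k _; case: (hstep k).
set f := fun k => lsq A b (x k).
have hdesc : forall k, f k.+1 <= f k - gam * sqnorm (x k.+1 - x k).
  by move=> k; exact: (descent Lp hmu (hC k) (hstep k)).
have f0 : forall k, 0 <= f k by move=> k; apply: sqnorm_ge0.
have mono : forall k j, (k <= j)%N -> f j <= f k.
  move=> k; elim=> [|j IH] hkj.
    by rewrite leqn0 in hkj; move/eqP: hkj => ->.
  rewrite leq_eqVlt in hkj; case/orP: hkj => [/eqP -> //|hkj].
  apply: le_trans (IH hkj); have := hdesc j; have := sqnorm_ge0 (x j.+1 - x j).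
  move=> h1 h2; have : 0 <= gam * sqnorm (x j.+1 - x j) by rewrite mulr_ge0 // ltW.
  lra.
have hd : ev0 (fun k => sqnorm (x k.+1 - x k)).
  move=> e e0.
  set E := [set r : R | exists k, r = - f k].
  have hE : has_sup E.
    split; first by exists (- f 0%N); exists 0%N.
    by exists 0 => r [k ->]; rewrite oppr_le0.
  have [r [k0 ->] hr] := sup_adherent (mulr_gt0 gp e0) hE.
  exists k0 => k hk.
  have h1 : - f k.+1 <= sup E by apply: ub_le_sup; [case: hE | exists k.+1].
  have h2 := mono k0 k hk; have h3 := hdesc k.
  rewrite -(ltr_pM2l gp); lra.
set P := A^T *m A - (L / 2)%:M.
set CK := \sum_(S : {set 'I_n}) mxc (invmx (KS A S)).
set C := CK * mxc P.
have CK0 : 0 <= CK by apply: sumr_ge0 => S _; apply: mxc_ge0.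
have C0 : 0 <= C by apply: mulr_ge0 => //; apply: mxc_ge0.
have hz : forall k, sqnorm (x k.+1 - zS A b (supp (x k.+1))) <= C * sqnorm (x k.+1 - x k).
  move=> k; rewrite /C -mulrA.
  apply: le_trans (step_bound sreg hsn Lp (hstep k)) _.
  apply: ler_wpM2r; first by apply: mulr_ge0; [apply: mxc_ge0 | apply: sqnorm_ge0].
  rewrite /CK (bigD1 (supp (x k.+1))) //= lerDl.
  by apply: sumr_ge0 => S _; apply: mxc_ge0.
set p := fun k => zS A b (supp (x k.+1)).
have [dl dl0 hdl] := fin_pos_min
  (fun ST : {set 'I_n} * {set 'I_n} => sqnorm (zS A b ST.1 - zS A b ST.2)).
have sep : forall S T, zS A b S != zS A b T -> dl < sqnorm (zS A b S - zS A b T).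
  move=> S T hne; apply: (hdl (S, T)); apply: sqnorm_gt0; by rewrite subr_eq0.
set e0 := dl / (3 * (2 * C + 1)).
have C1 : 0 < 3 * (2 * C + 1) by lra.
have e0p : 0 < e0 by rewrite divr_gt0.
have e0E : 3 * (2 * C + 1) * e0 = dl by rewrite /e0; field; lra.
have [N hN] := hd e0 e0p.
have pst : forall k, (N <= k)%N -> p k.+1 = p k.
  move=> k hk; apply/eqP; apply/negPn/negP => hne.
  have h1 := sep _ _ hne.
  have h2 := tri (p k.+1) (x k.+2) (x k.+1) (p k).
  have h3 := hz k.+1; have h4 := hz k.
  rewrite -/(p k.+1) -/(p k) sqnorm_sym in h3.
  rewrite -/(p k) in h4.
  have h5 := hN k hk; have h6 := hN k.+1 (leqW hk).
  have h7 : C * sqnorm (x k.+1 - x k) <= C * e0 by rewrite ler_wpM2l // ltW.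
  have h8 : C * sqnorm (x k.+2 - x k.+1) <= C * e0 by rewrite ler_wpM2l // ltW.
  move: h1 h2 h3 h4 h5 h6 h7 h8 e0E.
  rewrite [sqnorm (p k.+1 - x k.+2)]sqnorm_sym.
  set a1 := sqnorm (x k.+2 - p k.+1); set a2 := sqnorm (x k.+2 - x k.+1).
  set a3 := sqnorm (x k.+1 - p k); set a4 := sqnorm (x k.+1 - x k).
  set D := sqnorm (p k.+1 - p k).
  move=> h1 h2 h3 h4 h5 h6 h7 h8 hE.
  have : 3 * (a1 + a2 + a3) < 3 * (2 * C + 1) * e0 by lra.
  lra.
have pN : forall j, p (N + j)%N = p N.
  elim=> [|j IH]; first by rewrite addn0.
  by rewrite addnS pst ?IH // leq_addr.
set q := p N.
have hconv : ev0 (fun k => sqnorm (x k - q)).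
  move=> e ep.
  set e' := e / (C + 1).
  have e'p : 0 < e' by rewrite divr_gt0 //; lra.
  have [N' hN'] := hd e' e'p.
  exists (maxn N N').+1 => [[|k]] //; rewrite ltnS geq_max => /andP [hk1 hk2].
  have -> : q = p k by rewrite /q -(subnKC hk1) pN.
  apply: le_lt_trans (hz k) _.
  have h1 : C * sqnorm (x k.+1 - x k) <= C * e' by rewrite ler_wpM2l // ltW // hN'.
  have h2 : C * e' = e - e' by rewrite /e'; field; lra.
  lra.
exists q; split; last exact: ev0_cvg hconv.
have Cq : Cs s q.
  have [ep ep0 hep] := fin_pos_min (fun i : 'I_n => q i 0 ^+ 2).
  have [K hK] := hconv ep ep0.
  rewrite /Cs; apply: leq_trans (hC K); apply: supp_le => i hi.
  apply/negP => /eqP hx0.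
  have h1 := entry_le (x K - q) i.
  have e : (x K - q) i 0 = - q i 0 by rewrite !mxE hx0 sub0r.
  rewrite e sqrrN in h1.
  have h2 : 0 < q i 0 ^+ 2 by rewrite lt_neqAle sqr_ge0 andbT eq_sym sqrf_eq0.
  have h3 := hep i h2; have h4 := hK K (leqnn K); rewrite /= in h3 h4.
  lra.
split => //; split => // z Cz.
set ys := q - L^-1 *: grad_lsq A b q.
set W := sqnorm (q - ys); set U := sqnorm (z - ys).
rewrite leNgt; apply/negP => hUW.
set T : 'M[R]_n := 1%:M - (L^-1 * 2) *: (A^T *m A).
set Tc := mxc T.
have Tc0 : 0 <= Tc by apply: mxc_ge0.
have hy : forall k, (x k - L^-1 *: grad_lsq A b (x k)) - ys = T *m (x k - q).
  move=> k.
  have eA : A^T *m A *m (x k - q) = A^T *m (A *m x k - b) - A^T *m (A *m q - b).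
    rewrite -mulmxBr -mulmxA; congr (_ *m _); rewrite mulmxBr.
    set X1 := A *m x k; set X2 := A *m q.
    by apply/matrixP => i j; rewrite !mxE; ring.
  rewrite /T mulmxBl mul1mx -scalemxAl eA /ys /grad_lsq.
  set u := A^T *m (A *m x k - b); set w := A^T *m (A *m q - b).
  apply/matrixP => i j; rewrite !mxE; ring.
have W0 : 0 <= W by apply: sqnorm_ge0.
have U0 : 0 <= U by apply: sqnorm_ge0.
set eta := (W - U) / (2 * (W + U + 2)).
have etap : 0 < eta by rewrite divr_gt0 //; lra.
have etaE : eta * (2 * (W + U + 2)) = W - U by rewrite /eta; field; lra.
set eps := eta ^+ 2 / (2 + 3 * Tc).
have epsp : 0 < eps by rewrite divr_gt0 ?exprn_gt0 //; lra.
have epsE : (2 + 3 * Tc) * eps = eta * eta by rewrite /eps; field; lra.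
have [K hK] := hconv eps epsp.
have hK1 := hK K (leqnn K); have hK2 := hK K.+1 (leqW (leqnn K)).
have hp := (hstep K).2 z Cz.
set yK := x K - L^-1 *: grad_lsq A b (x K) in hp hy.
have e1 : x K.+1 - yK = (q - ys) + ((x K.+1 - q) - (yK - ys)).
  by apply/matrixP => i j; rewrite !mxE; ring.
have e2 : z - yK = (z - ys) + (- (yK - ys)).
  by apply/matrixP => i j; rewrite !mxE; ring.
rewrite e1 e2 in hp.
have G := Glem etap hp.
rewrite -/W -/U sqnormN in G.
have ha : sqnorm (yK - ys) <= Tc * eps.
  rewrite hy; apply: le_trans (mx_bound _ _) _; rewrite ler_wpM2l // ltW //.
have hb := sqnormB_le (x K.+1 - q) (yK - ys).
move: G ha hb; set E2 := sqnorm (_ - (yK - ys)); set F2 := sqnorm (yK - ys).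
set c2 := sqnorm (x K.+1 - q) in hK2 *.
move=> G ha hb.
have hF0 : 0 <= F2 by apply: sqnorm_ge0.
have hE0 : 0 <= E2 by apply: sqnorm_ge0.
have h1 : E2 + F2 <= eta * eta.
  rewrite -epsE.
  have : Tc * eps <= Tc * eps by [].
  nra.
have h2 : (E2 + F2) / eta <= eta by rewrite ler_pdivrMr //.
have h3 : F2 <= eta.
  have h4 : eta <= 1.
    have : eta * (2 * (W + U + 2)) <= 1 * (2 * (W + U + 2)) by rewrite etaE; lra.
    by rewrite ler_pM2r //; lra.
  have : Tc * eps <= eta * eta by nra.
  nra.
have : W - U <= eta * (W + U) + eta + eta by lra.
move: etaE; rewrite !mulrDr; lra.
Qed.
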